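(* For any $x\in\mathrm{St}(d,r)$, $\|\nabla\mathcal{L}(x)\|_F\le2\|\Lambda(x)\|_F$.
   Context: $\langle A,B\rangle=\mathrm{Tr}(AB^\top)$; $\mathrm{sym}(A)=\frac12(A+A^\top)$, $\mathrm{skew}(A)=\frac12(A-A^\top)$; $\|\cdot\|_F$ Frobenius norm. $\mathrm{St}(d,r)=\{x\in\mathbb{R}^{d\times r}:x^\top x=I_r\}$. $f:\mathbb{R}^{d\times r}\to\mathbb{R}$ is $C^2$, $\mathrm{grad} f(x)=\mathrm{skew}(\nabla f(x)x^\top)x$. For $\lambda>0$, $\Lambda(x)=\mathrm{grad} f(x)+\lambda x(x^\top x-I_r)$. For $\gamma>0$, the merit function is $\mathcal{L}(x)=f(x)-\frac12\langle\mathrm{sym}(x^\top\nabla f(x)),x^\top x-I_r\rangle+\frac\gamma4\|x^\top x-I_r\|_F^2$. *)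

(* Defs.v *)
From HB Require Import structures.
From mathcomp Require Import all_boot all_order all_algebra.
From mathcomp Require Import all_classical all_reals all_analysis.
Set Implicit Arguments. Unset Strict Implicit. Unset Printing Implicit Defensive.
Import Order.TTheory GRing.Theory Num.Theory.
Import numFieldNormedType.Exports.
Local Open Scope ring_scope.

Section Defs.
Variables (R : realType) (d r : nat).
Notation M := 'M[R]_(d, r).

Definition fip (m n : nat) (A B : 'M[R]_(m, n)) : R := \tr (A *m B^T).
Definition frob (m n : nat) (A : 'M[R]_(m, n)) : R :=
  Num.sqrt (\sum_(i < m) \sum_(j < n) A i j ^+ 2).
Definition msym (n : nat) (A : 'M[R]_n) : 'M[R]_n := 2^-1 *: (A + A^T).
Definition mskew (n : nat) (A : 'M[R]_n) : 'M[R]_n := 2^-1 *: (A - A^T).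

Definition egrad (F : M -> R^o) (x : M) : M :=
  \matrix_(i < d, j < r) ('D_(delta_mx i j) F x : R).

Definition stiefel (x : M) : Prop := x^T *m x = 1%:M.

Definition rgrad (f : M -> R^o) (x : M) : M :=
  mskew (egrad f x *m x^T) *m x.

Definition Lambda (f : M -> R^o) (lam : R) (x : M) : M :=
  rgrad f x + lam *: (x *m (x^T *m x - 1%:M)).

Definition merit (f : M -> R^o) (gam : R) (x : M) : R^o :=
  f x - 2^-1 * fip (msym (x^T *m egrad f x)) (x^T *m x - 1%:M)
      + gam / 4 * frob (x^T *m x - 1%:M) ^+ 2.

Definition C2 (f : M -> R^o) : Prop :=
  (forall x, differentiable f x) /\
  (forall x, differentiable (egrad f) x) /\
  (forall (i : 'I_d) (j : 'I_r), continuous (egrad (fun y => (egrad f y i j : R^o)))).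
End Defs.

(* Main.v *)
Require Import Defs.
From HB Require Import structures.
From mathcomp Require Import all_boot all_order all_algebra.
From mathcomp Require Import all_classical all_reals all_analysis.
From mathcomp Require Import ring lra.
Import Order.TTheory GRing.Theory Num.Theory.
Import numFieldNormedType.Exports.
Local Open Scope classical_set_scope.
Local Open Scope ring_scope.
Set Implicit Arguments. Unset Strict Implicit. Unset Printing Implicit Defensive.

Section Alg.
Variable R : realType.

Lemma fipE m n (A B : 'M[R]_(m, n)) :
  fip A B = \sum_(i < m) \sum_(j < n) A i j * B i j.
Proof.
rewrite /fip /mxtrace; apply: eq_bigr => i _; rewrite !mxE.
by apply: eq_bigr => j _; rewrite !mxE.
Qed.

Lemma fip_ge0 m n (A : 'M[R]_(m, n)) : 0 <= fip A A.
Proof. by rewrite fipE; apply: sumr_ge0 => i _; apply: sumr_ge0 => j _; rewrite -expr2 sqr_ge0. Qed.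

Lemma frob_fip m n (A : 'M[R]_(m, n)) : frob A = Num.sqrt (fip A A).
Proof. by rewrite /frob fipE; congr Num.sqrt; apply: eq_bigr => i _; apply: eq_bigr => j _; rewrite expr2. Qed.

Lemma frob2 m n (A : 'M[R]_(m, n)) : frob A ^+ 2 = fip A A.
Proof. by rewrite frob_fip sqr_sqrtr // fip_ge0. Qed.

Lemma fip_trC m n (A B : 'M[R]_(m, n)) : fip A B = fip B A.
Proof. by rewrite !fipE; apply: eq_bigr => i _; apply: eq_bigr => j _; rewrite mulrC. Qed.

Lemma frob_le2 m n (A B : 'M[R]_(m, n)) : fip A A <= 4 * fip B B -> frob A <= 2 * frob B.
Proof.
move=> H; rewrite !frob_fip.
have -> : 2 = Num.sqrt (4 : R).
  by rewrite (_ : (4:R) = 2 ^+ 2) ?sqrtr_sqr ?ger0_norm // expr2 -natrM.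
by rewrite -sqrtrM ?ler0n // ler_sqrt // mulr_ge0 ?ler0n ?fip_ge0.
Qed.


Lemma fipDl m n (A B C : 'M[R]_(m, n)) : fip (A + B) C = fip A C + fip B C.
Proof. by rewrite /fip mulmxDl mxtraceD. Qed.
Lemma fipNl m n (A C : 'M[R]_(m, n)) : fip (- A) C = - fip A C.
Proof. by rewrite /fip mulNmx linearN. Qed.
Lemma fipZl m n k (A C : 'M[R]_(m, n)) : fip (k *: A) C = k * fip A C.
Proof. by rewrite /fip -scalemxAl mxtraceZ. Qed.
Lemma fipDr m n (A B C : 'M[R]_(m, n)) : fip C (A + B) = fip C A + fip C B.
Proof. by rewrite fip_trC fipDl !(fip_trC _ C). Qed.
Lemma fipNr m n (A C : 'M[R]_(m, n)) : fip C (- A) = - fip C A.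
Proof. by rewrite fip_trC fipNl fip_trC. Qed.
Lemma fipZr m n k (A C : 'M[R]_(m, n)) : fip C (k *: A) = k * fip C A.
Proof. by rewrite fip_trC fipZl fip_trC. Qed.

Lemma key_ineq d r (x : 'M[R]_(d, r)) (G : 'M[R]_(d, r)) :
  x^T *m x = 1%:M ->
  fip (G - x *m msym (x^T *m G)) (G - x *m msym (x^T *m G))
  <= 4 * fip (mskew (G *m x^T) *m x) (mskew (G *m x^T) *m x).
Proof.
move=> xx.
set L := mskew (G *m x^T) *m x.
set P := x *m x^T.
have HL : L = 2^-1 *: (G - x *m (G^T *m x)).
  by rewrite /L /mskew -scalemxAl mulmxBl -!mulmxA xx mulmx1 trmx_mul trmxK mulmxA.
have e1 : x *m msym (x^T *m G) = 2^-1 *: (x *m (x^T *m G) + x *m (G^T *m x)).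
  by rewrite /msym -scalemxAr mulmxDr trmx_mul trmxK.
have e2 : P *m L = 2^-1 *: (x *m (x^T *m G) - x *m (G^T *m x)).
  rewrite HL /P -scalemxAr mulmxBr !mulmxA -(mulmxA x x^T x) xx mulmx1.
  by rewrite -!mulmxA.
have HN : G - x *m msym (x^T *m G) = 2 *: L - P *m L.
  rewrite e1 e2 HL.
  move: (x *m (x^T *m G)) (x *m (G^T *m x)) => b c.
  apply/matrixP => i j; rewrite !mxE.
  by field.
have PT : P^T = P by rewrite /P trmx_mul trmxK.
have PP : P *m P = P by rewrite /P mulmxA -(mulmxA x x^T x) xx mulmx1.
clearbody L P.
have t1 : fip (P *m L) (P *m L) = fip L (P *m L).
  rewrite /fip trmx_mul PT.
  rewrite mulmxA mxtrace_mulC !mulmxA PP.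
  by rewrite -mulmxA mxtrace_mulC.
have t2 : fip (P *m L) L = fip L (P *m L) by rewrite fip_trC.
rewrite HN !(fipDl, fipDr, fipNl, fipNr, fipZl, fipZr) t1 t2.
have := fip_ge0 (P *m L); rewrite t1.
move: (fip L (P *m L)) (fip L L) => t u; lra.
Qed.
End Alg.

Section Cont.
Variable R : realType.

Definition c0 (g : R -> R) := g @ (nbhs (0:R)) --> g 0.

Lemma c0_cst k : c0 (fun _ => k).
Proof. exact: cvg_cst. Qed.
Lemma c0_id : c0 id.
Proof. exact: cvg_id. Qed.
Lemma c0D g1 g2 : c0 g1 -> c0 g2 -> c0 (fun h => g1 h + g2 h).
Proof. move=> H1 H2; exact: cvgD. Qed.
Lemma c0N g1 : c0 g1 -> c0 (fun h => - g1 h).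
Proof. move=> H1; exact: cvgN. Qed.
Lemma c0M g1 g2 : c0 g1 -> c0 g2 -> c0 (fun h => g1 h * g2 h).
Proof. move=> H1 H2; exact: cvgM. Qed.
Lemma c0_sum n (F : 'I_n -> R -> R) :
  (forall i, c0 (F i)) -> c0 (fun h => \sum_(i < n) F i h).
Proof.
move=> H; rewrite /c0; apply: cvg_big => //.
  exact: add_continuous.
by move=> i _; apply: H.
Qed.

Definition mc0 m n (M : R -> 'M[R]_(m, n)) := forall i j, c0 (fun h => M h i j).

Lemma mc0_cst m n (A : 'M[R]_(m, n)) : mc0 (fun _ => A).
Proof. by move=> i j; apply: c0_cst. Qed.
Lemma mc0D m n (M N : R -> 'M[R]_(m, n)) : mc0 M -> mc0 N -> mc0 (fun h => M h + N h).
Proof. move=> H1 H2 i j; rewrite /c0; under eq_cvg do rewrite mxE; rewrite mxE; exact: c0D. Qed.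
Lemma mc0N m n (M : R -> 'M[R]_(m, n)) : mc0 M -> mc0 (fun h => - M h).
Proof. move=> H1 i j; rewrite /c0; under eq_cvg do rewrite mxE; rewrite mxE; exact: c0N. Qed.
Lemma mc0Z m n (s : R -> R) (M : R -> 'M[R]_(m, n)) : c0 s -> mc0 M -> mc0 (fun h => s h *: M h).
Proof. move=> H1 H2 i j; rewrite /c0; under eq_cvg do rewrite mxE; rewrite mxE; exact: c0M. Qed.
Lemma mc0_tr m n (M : R -> 'M[R]_(m, n)) : mc0 M -> mc0 (fun h => (M h)^T).
Proof. move=> H1 i j; rewrite /c0; under eq_cvg do rewrite mxE; rewrite mxE; exact: H1. Qed.
Lemma mc0_mul m n p (M : R -> 'M[R]_(m, n)) (N : R -> 'M[R]_(n, p)) :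
  mc0 M -> mc0 N -> mc0 (fun h => M h *m N h).
Proof.
move=> H1 H2 i j; rewrite /c0; under eq_cvg do rewrite mxE; rewrite mxE.
apply: (c0_sum (F := fun k h => M h i k * N h k j)) => k; exact: c0M.
Qed.
Lemma c0_fip m n (M N : R -> 'M[R]_(m, n)) :
  mc0 M -> mc0 N -> c0 (fun h => fip (M h) (N h)).
Proof.
move=> H1 H2; rewrite /c0; under eq_cvg do rewrite fipE; rewrite fipE.
apply: (c0_sum (F := fun i h => \sum_(j < n) M h i j * N h i j)) => i.
apply: (c0_sum (F := fun j h => M h i j * N h i j)) => j; exact: c0M.
Qed.
End Cont.

Section Main.
Variable R : realType.

Lemma mc0_line d r (v x : 'M[R]_(d, r)) : mc0 (fun h => h *: v + x).
Proof. apply: mc0D; last exact: mc0_cst. apply: mc0Z; [exact: c0_id | exact: mc0_cst]. Qed.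

Lemma mc0_grad d r (F : 'M[R]_(d, r) -> 'M[R]_(d, r)) (v x : 'M[R]_(d, r)) :
  {for x, continuous F} -> mc0 (fun h => F (h *: v + x)).
Proof.
move=> cF i j; rewrite /c0 scale0r add0r.
have Hl : (fun h : R => h *: v + x) @ nbhs (0:R) --> 0 *: v + x.
  apply: cvgD; last exact: cvg_cst.
  apply: cvgZ; [exact: cvg_id | exact: cvg_cst].
rewrite scale0r add0r in Hl.
apply: (cvg_comp (fun h => h *: v + x) (fun y => F y i j) Hl).
apply: (cvg_comp F (fun M => M i j) cF).
exact: coord_continuous.
Qed.

Lemma deriv_merit d r (f : 'M[R]_(d, r) -> R^o) gam (x v : 'M[R]_(d, r)) :
  differentiable f x -> differentiable (egrad f) x -> x^T *m x = 1%:M ->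
  'D_v (merit f gam) x = 'D_v f x - 2^-1 * fip (msym (x^T *m egrad f x)) (v^T *m x + x^T *m v).
Proof.
move=> df dg xx.
set A := fun y => msym (y^T *m egrad f y).
set C := v^T *m x + x^T *m v; set W := v^T *m v.
have key : forall h : R, (h *: v + x)^T *m (h *: v + x) - 1%:M = h *: (C + h *: W).
  move=> h; rewrite !linearD !linearZ /= !mulmxDl -!scalemxAl xx /C /W.
  move: (v^T *m v) (v^T *m x) (x^T *m v) => a b c.
  apply/matrixP => i j; rewrite !mxE; ring.
have fip0 : forall m n (B : 'M[R]_(m, n)), fip B 0 = 0.
  by move=> m n B; rewrite fipE big1 // => i _; rewrite big1 // => j _; rewrite mxE mulr0.
have m0 : merit f gam x = f x.
  by rewrite /merit xx subrr frob2 !fip0 mulr0 subr0 mulr0 addr0.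
have cA : mc0 (fun h => A (h *: v + x)).
  rewrite /A /msym; apply: mc0Z; first exact: c0_cst.
  have cB : mc0 (fun h => (h *: v + x)^T *m egrad f (h *: v + x)).
    apply: mc0_mul; first exact/mc0_tr/mc0_line.
    exact/mc0_grad/differentiable_continuous.
  by apply: mc0D => //; apply: mc0_tr.
have cZ : mc0 (fun h => C + h *: W).
  by apply: mc0D; [exact: mc0_cst | apply: mc0Z; [exact: c0_id | exact: mc0_cst]].
have Hg : c0 (fun h => - (2^-1 * fip (A (h *: v + x)) (C + h *: W)) + gam / 4 * (h * fip (C + h *: W) (C + h *: W))).
  apply: c0D; first by apply/c0N/c0M; [exact: c0_cst | exact: c0_fip].
  by apply: c0M; [exact: c0_cst | apply: c0M; [exact: c0_id | exact: c0_fip]].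
have Hg' := (continuous_withinNx _ _).1 Hg.
rewrite /= !scale0r !addr0 add0r mul0r mulr0 addr0 in Hg'.
have Hf : (fun h => h^-1 *: ((f \o shift x) (h *: v) - f x)) @ 0^' --> 'D_v f x.
  exact: (diff_derivable (v:=v) df).
apply: cvg_lim => //.
apply: (cvg_trans _ (cvgD Hf Hg')).
apply: near_eq_cvg; near=> h.
have hn0 : h != 0 by near: h; exact: nbhs_dnbhs_neq.
have addE : forall (F G : R -> R^o) (t : R), (F + G) t = F t + G t by [].
rewrite addE /= m0 /merit key frob2 fipZl !fipZr /A.
move: (f (h *: v + x)) (f x) (fip _ (C + h *: W)) (fip (C + h *: W) (C + h *: W)) => a b c e.
rewrite /GRing.scale /=.
by field.
Unshelve. all: by end_near.
Qed.
End Main.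

Lemma trdelta (R : realType) m n (a : 'I_m) (b : 'I_n) (M : 'M[R]_(n, m)) :
  \tr (delta_mx a b *m M) = M b a.
Proof.
rewrite /mxtrace (bigD1 a) //= big1 ?addr0; last first.
  move=> k ka; rewrite mxE big1 // => l _; rewrite mxE (negbTE ka) /= mul0r //.
rewrite mxE (bigD1 b) //= big1 ?addr0; last first.
  by move=> l lb; rewrite mxE (negbTE lb) andbF mul0r.
by rewrite mxE !eqxx mul1r.
Qed.

Lemma fip_delta (R : realType) d r (S : 'M[R]_r) (x : 'M[R]_(d, r)) i j :
  S^T = S -> fip S ((delta_mx i j)^T *m x + x^T *m delta_mx i j) = 2 * (x *m S) i j.
Proof.
move=> ST; rewrite fipDr /fip !trmx_mul !trmxK trmx_delta.
rewrite [in X in X + _]mulmxA [X in X + _]mxtrace_mulC trdelta.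
rewrite mulmxA mxtrace_mulC mulmxA mxtrace_mulC trdelta.
have -> : (S *m x^T) j i = (x *m S) i j.
  rewrite !mxE; apply: eq_bigr => k _.
  have Sjk : S k j = S j k by rewrite -{1}ST mxE.
  by rewrite mxE Sjk mulrC.
by rewrite mulr2n mulrDl mul1r.
Qed.

Unset Implicit Arguments.
Theorem lemma12 (R : realType) (d r : nat) (f : 'M[R]_(d, r) -> R^o)
  (lam gam : R) :
  C2 f -> 0 < lam -> 0 < gam ->
  forall x : 'M[R]_(d, r), stiefel x ->
  frob (egrad (merit f gam) x) <= 2 * frob (Lambda f lam x).
Proof.
move=> [df [dg _]] _ _ x xx.
have E : egrad (merit f gam) x = egrad f x - x *m msym (x^T *m egrad f x).
  apply/matrixP => i j; rewrite !mxE deriv_merit // fip_delta.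
    by rewrite mulrA mulVf ?pnatr_eq0 // mul1r mxE.
  by rewrite /msym linearZ /= linearD /= trmxK addrC.
have L : Lambda f lam x = mskew (egrad f x *m x^T) *m x.
  by rewrite /Lambda xx subrr mulmx0 scaler0 addr0.
rewrite E L; apply: frob_le2; exact: key_ineq.
Qed.
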